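(* Assume the standing assumptions (A), a quadrature rule and grid as below, and let $\rho_0:\mathbb{R}\to[0,\rho_{\max}]$ be such that the initial cell averages are $\bar\rho_j(0)=\sum_{\nu=1}^R\gamma_\nu\rho_0(x_{j-1/2}+hy_\nu)$; set $\rho_m=\inf_{\mathbb{R}}\rho_0$, $\rho_M=\sup_{\mathbb{R}}\rho_0$. Suppose the reconstruction used at every stage has the property (R) below, and let the semi-discrete operator $L$ be defined by $L(\bar\rho)_j=-\frac1h\big(V_{j+1/2}g(\rho^-_{j+1/2})-V_{j-1/2}g(\rho^-_{j-1/2})\big)$ with $V_{j+1/2}$, $\rho^-_{j+1/2}$ computed from that reconstruction. Let the time integration be an SSP method (in the sense below) with SSP constant $c_{SSP}>0$ and time step $\tau$ satisfying $$\tau\le c_{SSP}\,\frac{\gamma_R h}{\gamma_R h\,w_\eta(0)\|v'\|\|g\|+\|v\|\|g'\|}.$$ Then the fully discrete approximate cell averages satisfy $\rho_m\le\bar\rho_j(t^n)\le\rho_M$ for all $j\in\mathbb{Z}$ and all $t^n=n\tau$, $n\in\mathbb{N}$.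
   Context: Standing assumptions (A): $\rho_{\max}>0$, $\eta>0$; $g\in C^1([0,\rho_{\max}];\mathbb{R}_{\ge0})$ with $g'\ge0$; $v\in C^1([0,\rho_{\max}];\mathbb{R}_{\ge0})$ with $v'\le0$; $w_\eta\in C^1([0,\eta];\mathbb{R}_{\ge0})$ with $w_\eta'\le0$ and $\int_0^\eta w_\eta=1$. Norms $\|\cdot\|$ are sup norms on $[0,\rho_{\max}]$. Grid: $h>0$, $x_j=x_0+jh$, $I_j=[x_{j-1/2},x_{j+1/2}]$, $N\in\mathbb{N}$ with $Nh=\eta$. Quadrature: nodes $y_1,\dots,y_R\in[0,1]$ with $y_R=1$, weights $\gamma_\nu>0$, $\sum\gamma_\nu=1$; $w_\eta^{\nu,k}=w_\eta((k+y_\nu)h)$ with $h\sum_{k=0}^{N-1}\sum_\nu\gamma_\nu w_\eta^{\nu,k}=1$. Property (R): whenever all cell averages $\bar\rho_l$ lie in $[\rho_m,\rho_M]$, the reconstruction provides for each $l$ a polynomial $P_l$ on $I_l$ with $\frac1h\int_{I_l}P_l=\bar\rho_l$, for which the quadrature rule is exact, and whose values $\rho_l^\nu=P_l(x_{l-1/2}+y_\nu h)$ lie in $[\rho_m,\rho_M]$ (in the paper this is achieved by applying the Zhang–Shu linear scaling limiter $\tilde P_l=\bar\rho_l+\theta(P_l-\bar\rho_l)$ to CWENO reconstructions). Then $\rho^-_{j+1/2}=P_j(x_{j+1/2})=\rho_j^R$ and $V_{j+1/2}=v\big(h\sum_{k=0}^{N-1}\sum_\nu\gamma_\nu w_\eta^{\nu,k}\rho^\nu_{j+k+1}\big)$.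 SSP method with constant $c_{SSP}$: an explicit (multistage and/or multistep) method in which every new stage or step value is a convex combination of terms of the form $u+\tau\beta L(u)$, where $u$ is a previously computed stage/step value and $0\le\beta\le 1/c_{SSP}$ (equivalently, it is a convex combination of forward Euler steps with step sizes at most $\tau/c_{SSP}$). *)

(* Defs.v *)
From Stdlib Require Import Reals Lra List.
Open Scope R_scope.

Fixpoint sumR (n : nat) (f : nat -> R) : R :=
  match n with
  | O => 0
  | S k => sumR k f + f k
  end.

Fixpoint peval (p : list R) (x : R) : R :=
  match p with
  | nil => 0
  | a :: q => a + x * peval q x
  end.

(* f is C^1 on [a,b] with derivative f' (one-sided derivatives at the
   endpoints, derivative continuous on [a,b]) *)
Definition C1_on (f f' : R -> R) (a b : R) : Prop :=
  (forall x, a <= x <= b ->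
     limit1_in (fun y => (f y - f x) / (y - x))
               (fun y => a <= y <= b /\ y <> x) (f' x) x) /\
  (forall x, a <= x <= b ->
     limit1_in f' (fun y => a <= y <= b) (f' x) x).

Definition is_supnorm (f : R -> R) (a b n : R) : Prop :=
  is_lub (fun z => exists x, a <= x <= b /\ z = Rabs (f x)) n.

Definition is_glb (E : R -> Prop) (m : R) : Prop :=
  (forall x, E x -> m <= x) /\ (forall c, (forall x, E x -> c <= x) -> c <= m).

(* cell interfaces: x_{j-1/2} = x0 + (j - 1/2) h *)
Definition xl (x0 h : R) (j : Z) : R := x0 + (IZR j - / 2) * h.

(* A reconstruction maps a sequence of cell averages to, for each cell l,
   the coefficient list of a polynomial P_l on I_l. *)
Definition recon := (Z -> R) -> Z -> list R.

Definition rho_nu (rec : recon) (x0 h : R) (y : nat -> R)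
  (u : Z -> R) (l : Z) (nu : nat) : R :=
  peval (rec u l) (xl x0 h l + y nu * h).

Definition rho_minus (rec : recon) (x0 h : R) (u : Z -> R) (j : Z) : R :=
  peval (rec u j) (xl x0 h (j + 1)).

Definition Vhalf (rec : recon) (x0 h : R) (N Rq : nat) (y gam : nat -> R)
  (w v : R -> R) (u : Z -> R) (j : Z) : R :=
  v (h * sumR N (fun k => sumR Rq (fun nu =>
        gam nu * w ((INR k + y nu) * h) *
        rho_nu rec x0 h y u (j + Z.of_nat k + 1)%Z nu))).

Definition Lop (rec : recon) (x0 h : R) (N Rq : nat) (y gam : nat -> R)
  (w v g : R -> R) (u : Z -> R) (j : Z) : R :=
  - (1 / h) * (Vhalf rec x0 h N Rq y gam w v u j * g (rho_minus rec x0 h u j)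
              - Vhalf rec x0 h N Rq y gam w v u (j - 1) * g (rho_minus rec x0 h u (j - 1))).

Definition property_R (rec : recon) (x0 h : R) (Rq : nat) (y gam : nat -> R)
  (rm rM : R) : Prop :=
  forall u : Z -> R, (forall l, rm <= u l <= rM) ->
  forall l : Z,
    (exists pr : Riemann_integrable (peval (rec u l)) (xl x0 h l) (xl x0 h (l + 1)),
        RiemannInt pr / h = u l /\
        sumR Rq (fun nu => gam nu * peval (rec u l) (xl x0 h l + y nu * h))
          = RiemannInt pr / h) /\
    (forall nu, (nu < Rq)%nat -> rm <= rho_nu rec x0 h y u l nu <= rM).

(* SSP time integration: the whole computation history U 0, U 1, U 2, ...
   (all stage and step values, in computation order, U 0 = initial averages);
   every new value is a convex combination of forward Euler steps
   U i + tau * beta * L(U i) of previously computed values, 0 <= beta <= 1/c. *)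
Definition SSP_history (L : (Z -> R) -> Z -> R) (c tau : R)
  (U : nat -> Z -> R) : Prop :=
  forall m : nat, (1 <= m)%nat ->
    exists (K : nat) (idx : nat -> nat) (alpha beta : nat -> R),
      (forall k, (k < K)%nat ->
          (idx k < m)%nat /\ 0 <= alpha k /\ 0 <= beta k <= 1 / c) /\
      sumR K alpha = 1 /\
      (forall j : Z,
         U m j = sumR K (fun k =>
                   alpha k * (U (idx k) j + tau * beta k * L (U (idx k)) j))).

(* Main.v *)
Require Import Defs.
From Stdlib Require Import Reals Lra Lia List ZArith.
Open Scope R_scope.

Definition dlim (f f' : R -> R) (a b : R) : Prop :=
  forall x, a <= x <= b ->
     limit1_in (fun y => (f y - f x) / (y - x))
               (fun y => a <= y <= b /\ y <> x) (f' x) x.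

Lemma abs_bnd x c : Rabs x <= c -> -c <= x <= c.
Proof. intros H. pose proof (Rle_abs x). pose proof (Rle_abs (-x)).
  rewrite Rabs_Ropp in H1. lra. Qed.

Lemma loc_lip f f' a b : dlim f f' a b -> forall z, a <= z <= b ->
  exists d K, 0 < d /\ 0 <= K /\ forall z', a <= z' <= b -> Rabs (z' - z) < d ->
     Rabs (f z' - f z) <= K * Rabs (z' - z).
Proof.
  intros H z Hz. destruct (H z Hz 1 Rlt_0_1) as [alp [Halp Hl]].
  exists alp, (Rabs (f' z) + 1). split; [lra|]. split; [pose proof (Rabs_pos (f' z)); lra|].
  intros z' Hz' Hd. destruct (Req_dec z' z) as [->|Hne].
  - rewrite !Rminus_diag, Rabs_R0. lra.
  - assert (Hq := Hl z' (conj (conj Hz' Hne) Hd)). simpl in Hq. unfold Rdist in Hq.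
    assert (E : f z' - f z = ((f z' - f z) / (z' - z)) * (z' - z)).
    { field. lra. }
    rewrite E, Rabs_mult. apply Rmult_le_compat_r; [apply Rabs_pos|].
    apply Rabs_def2 in Hq as [? ?].
    pose proof (Rle_abs (f' z)). pose proof (Rle_abs (- f' z)). rewrite Rabs_Ropp in H3.
    unfold Rabs at 1; destruct (Rcase_abs _); lra.
Qed.

Lemma interior_deriv f f' a b : dlim f f' a b -> forall x, a < x < b ->
  derivable_pt_lim f x (f' x).
Proof.
  intros H x Hx eps Heps. destruct (H x ltac:(lra) eps Heps) as [alp [Halp Hl]].
  assert (Hp : 0 < Rmin alp (Rmin (x - a) (b - x))).
  { repeat apply Rmin_pos; lra. }
  exists (mkposreal _ Hp). simpl. intros h0 Hh0 Hab.
  pose proof (Rmin_l alp (Rmin (x - a) (b - x))).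
  pose proof (Rmin_r alp (Rmin (x - a) (b - x))).
  pose proof (Rmin_l (x - a) (b - x)). pose proof (Rmin_r (x - a) (b - x)).
  apply Rabs_def2 in Hab as [? ?].
  replace (f (x + h0) - f x) with (f (x+h0) - f x) by ring.
  assert (Hq := Hl (x + h0)). simpl in Hq. unfold Rdist in Hq.
  replace (x + h0 - x) with h0 in Hq by ring. apply Hq. split; [split; [lra|]|].
  - intro E. apply Hh0. lra.
  - apply Rabs_def1; lra.
Qed.

Lemma lim_le d C T : 0 < T -> 0 <= C -> (forall t, 0 < t < T -> d <= C * t) -> d <= 0.
Proof.
  intros HT HC H. destruct (Rle_dec d 0) as [|Hd]; auto. exfalso.
  set (t := Rmin (T/2) (d / (2 * (C + 1)))).
  assert (Ht1 : t <= T/2) by apply Rmin_l.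
  assert (Ht2 : t <= d / (2 * (C + 1))) by apply Rmin_r.
  assert (Ht0 : 0 < t). { apply Rmin_pos; [lra|]. apply Rdiv_lt_0_compat; lra. }
  specialize (H t ltac:(lra)).
  assert (C * t <= C * (d / (2 * (C+1)))) by (apply Rmult_le_compat_l; lra).
  assert (E : C * (d / (2 * (C+1))) = d * (C / (2*(C+1)))) by (field; lra).
  assert (C / (2*(C+1)) < 1).
  { apply (Rmult_lt_reg_r (2*(C+1))); [lra|]. unfold Rdiv. rewrite Rmult_assoc, Rinv_l; lra. }
  nra.
Qed.

Lemma mvt_upper f f' a b M : dlim f f' a b -> (forall z, a <= z <= b -> f' z <= M) ->
  forall x y, a <= x -> x <= y -> y <= b -> f y - f x <= M * (y - x).
Proof.
  intros H HM x y Hx Hxy Hy. destruct (Req_dec x y) as [->|Hne]; [lra|].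
  destruct (loc_lip f f' a b H x ltac:(lra)) as [dx [Kx [Hdx [HKx Hx']]]].
  destruct (loc_lip f f' a b H y ltac:(lra)) as [dy [Ky [Hdy [HKy Hy']]]].
  cut (f y - f x - M * (y - x) <= 0); [lra|].
  apply (lim_le _ (Kx + Ky + 2 * Rabs M) (Rmin (Rmin dx dy) ((y - x)/3))).
  { repeat apply Rmin_pos; lra. }
  { pose proof (Rabs_pos M); lra. }
  intros t Ht.
  pose proof (Rmin_l (Rmin dx dy) ((y - x)/3)). pose proof (Rmin_r (Rmin dx dy) ((y - x)/3)).
  pose proof (Rmin_l dx dy). pose proof (Rmin_r dx dy).
  destruct (MVT_cor2 f f' (x + t) (y - t) ltac:(lra)
     (fun c Hc => interior_deriv f f' a b H c ltac:(lra))) as [c [Ec Hc]].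
  assert (f' c <= M) by (apply HM; lra).
  assert (A1 : Rabs (f (x + t) - f x) <= Kx * Rabs (x + t - x)) by (apply Hx'; [lra| replace (x+t-x) with t by ring; rewrite Rabs_pos_eq; lra]).
  assert (A2 : Rabs (f (y - t) - f y) <= Ky * Rabs (y - t - y)) by (apply Hy'; [lra| replace (y-t-y) with (-t) by ring; rewrite Rabs_Ropp, Rabs_pos_eq; lra]).
  replace (x + t - x) with t in A1 by ring. replace (y - t - y) with (-t) in A2 by ring.
  rewrite Rabs_Ropp, (Rabs_pos_eq t) in A2 by lra. rewrite (Rabs_pos_eq t) in A1 by lra.
  apply abs_bnd in A1. apply abs_bnd in A2.
  assert (f' c * (y - t - (x + t)) <= M * (y - t - (x + t))) by (apply Rmult_le_compat_r; lra).
  pose proof (Rle_abs M). pose proof (Rle_abs (-M)). rewrite Rabs_Ropp in *.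
  assert (- (M * t) <= Rabs M * t) by nra.
  
  assert (E2 : M * (y - t - (x + t)) = M * (y - x) - 2 * (M * t)) by ring.
  rewrite E2 in *. rewrite <- Ec in *. lra.
Qed.

Lemma dlim_opp f f' a b : dlim f f' a b -> dlim (fun z => - f z) (fun z => - f' z) a b.
Proof.
  intros H x Hx eps He. destruct (H x Hx eps He) as [alp [Ha Hl]].
  exists alp. split; auto. intros z Hz. specialize (Hl z Hz). simpl in *. unfold Rdist in *.
  replace ((- f z - - f x) / (z - x) - - f' x) with (- ((f z - f x) / (z - x) - f' x)).
  - rewrite Rabs_Ropp; auto.
  - unfold Rdiv; ring.
Qed.

Lemma mvt_lower f f' a b m : dlim f f' a b -> (forall z, a <= z <= b -> m <= f' z) ->
  forall x y, a <= x -> x <= y -> y <= b -> m * (y - x) <= f y - f x.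
Proof.
  intros H Hm x y Hx Hxy Hy.
  pose proof (mvt_upper _ _ a b (-m) (dlim_opp f f' a b H) ltac:(intros z Hz; specialize (Hm z Hz); lra) x y Hx Hxy Hy).
  lra.
Qed.

Lemma sumR_ext n f g : (forall k, (k < n)%nat -> f k = g k) -> sumR n f = sumR n g.
Proof. induction n; simpl; intros H; auto. rewrite IHn by (intros; apply H; lia). rewrite H by lia. auto. Qed.

Lemma sumR_plus n f g : sumR n (fun k => f k + g k) = sumR n f + sumR n g.
Proof. induction n; simpl; [ring|]. rewrite IHn; ring. Qed.

Lemma sumR_minus n f g : sumR n (fun k => f k - g k) = sumR n f - sumR n g.
Proof. induction n; simpl; [ring|]. rewrite IHn; ring. Qed.

Lemma sumR_scal n c f : sumR n (fun k => c * f k) = c * sumR n f.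
Proof. induction n; simpl; [ring|]. rewrite IHn; ring. Qed.

Lemma sumR_le n f g : (forall k, (k < n)%nat -> f k <= g k) -> sumR n f <= sumR n g.
Proof. induction n; simpl; intros H; [lra|]. specialize (IHn ltac:(intros; apply H; lia)).
  specialize (H n ltac:(lia)). lra. Qed.

Lemma sumR_exch n m F : sumR n (fun k => sumR m (F k)) = sumR m (fun l => sumR n (fun k => F k l)).
Proof. induction n; simpl.
  - induction m; simpl; [auto| rewrite <- IHm; ring].
  - rewrite IHn, <- sumR_plus. auto. Qed.

Lemma sumR_ge_term n f i : (forall k, (k < n)%nat -> 0 <= f k) -> (i < n)%nat -> f i <= sumR n f.
Proof. induction n; simpl; intros H Hi; [lia|].
  assert (0 <= sumR n f) by (replace 0 with (sumR n (fun _ => 0)); [apply sumR_le; intros; apply H; lia| clear; induction n; simpl; lra]).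
  destruct (Nat.eq_dec i n) as [->|Hne]; [lra|].
  specialize (IHn ltac:(intros; apply H; lia) ltac:(lia)). specialize (H n ltac:(lia)). lra. Qed.

Lemma convex_bnd n a f lo hi : (forall k, (k < n)%nat -> 0 <= a k /\ lo <= f k <= hi) ->
  sumR n a = 1 -> lo <= sumR n (fun k => a k * f k) <= hi.
Proof. intros H Ha. split.
  - replace lo with (sumR n (fun k => a k * lo)) by (rewrite (sumR_ext _ _ (fun k => lo * a k)) by (intros; ring); rewrite sumR_scal, Ha; ring).
    apply sumR_le. intros k Hk. destruct (H k Hk). nra.
  - replace hi with (sumR n (fun k => a k * hi)) by (rewrite (sumR_ext _ _ (fun k => hi * a k)) by (intros; ring); rewrite sumR_scal, Ha; ring).
    apply sumR_le. intros k Hk. destruct (H k Hk). nra.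
Qed.

Lemma abel_aux (c f : nat -> R) M : forall n,
  (forall k, (k < n)%nat -> c (S k) <= c k) -> (forall k, (k <= S n)%nat -> f k <= M) ->
  sumR (S n) (fun k => c k * (f (S k) - f k)) <= c n * f (S n) - c 0%nat * f 0%nat + (c 0%nat - c n) * M.
Proof. induction n; intros Hc Hf; simpl.
  - lra.
  - simpl in IHn. specialize (IHn ltac:(intros; apply Hc; lia) ltac:(intros; apply Hf; lia)).
    assert (c (S n) <= c n) by (apply Hc; lia). assert (f (S n) <= M) by (apply Hf; lia).
    assert ((c n - c (S n)) * (f (S n) - M) <= 0) by nra. lra.
Qed.

Lemma abel_up (c f : nat -> R) M n :
  (forall k, (S k < n)%nat -> c (S k) <= c k) -> (forall k, (k < n)%nat -> 0 <= c k) -> 0 <= c 0%nat ->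
  (forall k, (k <= n)%nat -> f k <= M) ->
  sumR n (fun k => c k * (f (S k) - f k)) <= c 0%nat * (M - f 0%nat).
Proof. intros Hc Hc0 Hc00 Hf. destruct n as [|n].
  - simpl. assert (f 0%nat <= M) by (apply Hf; lia). nra.
  - pose proof (abel_aux c f M n ltac:(intros; apply Hc; lia) Hf).
    assert (0 <= c n) by (apply Hc0; lia). assert (f (S n) <= M) by (apply Hf; lia).
    assert (c n * f (S n) <= c n * M) by nra. lra.
Qed.

Lemma abel_lo (c f : nat -> R) m n :
  (forall k, (S k < n)%nat -> c (S k) <= c k) -> (forall k, (k < n)%nat -> 0 <= c k) -> 0 <= c 0%nat ->
  (forall k, (k <= n)%nat -> m <= f k) ->
  sumR n (fun k => c k * (f k - f (S k))) <= c 0%nat * (f 0%nat - m).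
Proof. intros Hc Hc0 Hc00 Hf.
  pose proof (abel_up c (fun k => - f k) (-m) n Hc Hc0 Hc00 ltac:(intros k Hk; specialize (Hf k Hk); lra)).
  rewrite (sumR_ext _ _ (fun k => c k * (- f (S k) - - f k))) by (intros; ring). lra.
Qed.

Lemma fe_half (rm rM u a b ga gb Vp Vm s h w0 gR nv ng nv' ng' : R) :
  0 < gR -> 0 < h -> 0 <= s -> u <= rM ->
  gR * (rM - a) <= rM - u -> b <= rM -> a <= rM ->
  0 <= ga <= ng ->
  (b <= a -> gb <= ga) -> (a <= b -> gb - ga <= ng' * (b - a)) ->
  0 <= Vm <= nv ->
  Vm - Vp <= nv' * (h * w0 * (rM - u)) ->
  0 <= nv' -> 0 <= w0 -> 0 <= ng' ->
  s * (gR * h * w0 * nv' * ng + nv * ng') <= gR * h ->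
  s * (Vm * gb - Vp * ga) <= h * (rM - u).
Proof.
  intros HgR Hh Hs Hu Ha Hb Ha' Hga Hg1 Hg2 HVm HV Hnv' Hw0 Hng' HCFL.
  assert (Hra : 0 <= rM - a) by lra.
  assert (T1 : Vm * (gb - ga) <= nv * ng' * (rM - a)).
  { destruct (Rle_dec a b).
    - specialize (Hg2 r). assert (gb - ga <= ng' * (rM - a)) by nra.
      assert (0 <= ng' * (rM - a)) by nra. nra.
    - assert (gb <= ga) by (apply Hg1; lra). assert (0 <= ng' * (rM - a)) by nra. nra. }
  assert (HZ : 0 <= nv' * (h * w0 * (rM - u))) by (repeat apply Rmult_le_pos; lra).
  assert (T2 : (Vm - Vp) * ga <= (nv' * (h * w0 * (rM - u))) * ng).
  { apply Rle_trans with ((nv' * (h * w0 * (rM - u))) * ga). apply Rmult_le_compat_r. lra. lra. apply Rmult_le_compat_l; lra. }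
  assert (E : Vm * gb - Vp * ga = Vm * (gb - ga) + (Vm - Vp) * ga) by ring.
  assert (T3 : gR * (Vm * gb - Vp * ga) <= (rM - u) * (nv * ng' + gR * h * w0 * nv' * ng)).
  { rewrite E. assert (gR * (nv * ng' * (rM - a)) <= nv * ng' * (rM - u)).
    { assert (0 <= nv * ng'). { assert (0 <= nv) by lra. nra. } nra. }
    assert (gR * ((nv' * (h * w0 * (rM - u))) * ng) = (rM - u) * (gR * h * w0 * nv' * ng)) by ring.
    nra. }
  assert (T4 : gR * (s * (Vm * gb - Vp * ga)) <= gR * (h * (rM - u))).
  { assert (s * (gR * (Vm * gb - Vp * ga)) <= s * ((rM - u) * (nv * ng' + gR * h * w0 * nv' * ng))) by nra.
    assert ((rM - u) * (s * (gR * h * w0 * nv' * ng + nv * ng')) <= (rM - u) * (gR * h)) by nra.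
    nra. }
  nra.
Qed.

Lemma fe_core (rm rM u a b ga gb Vp Vm s h w0 gR nv ng nv' ng' : R) :
  0 < gR -> 0 < h -> 0 <= s -> rm <= u <= rM ->
  gR * (rM - a) <= rM - u -> gR * (a - rm) <= u - rm -> rm <= b <= rM -> rm <= a <= rM ->
  0 <= ga <= ng -> 0 <= gb <= ng ->
  (b <= a -> gb <= ga) -> (a <= b -> gb - ga <= ng' * (b - a)) ->
  (a <= b -> ga <= gb) -> (b <= a -> ga - gb <= ng' * (a - b)) ->
  0 <= Vp <= nv -> 0 <= Vm <= nv ->
  Vm - Vp <= nv' * (h * w0 * (rM - u)) -> Vp - Vm <= nv' * (h * w0 * (u - rm)) ->
  0 <= nv' -> 0 <= w0 -> 0 <= ng' ->
  s * (gR * h * w0 * nv' * ng + nv * ng') <= gR * h ->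
  rm <= u + s * (- (1 / h) * (Vp * ga - Vm * gb)) <= rM.
Proof.
  intros. 
  assert (E : u + s * (- (1 / h) * (Vp * ga - Vm * gb)) = u + (s * (Vm * gb - Vp * ga)) / h) by (field; lra).
  rewrite E.
  pose proof (fe_half rm rM u a b ga gb Vp Vm s h w0 gR nv ng nv' ng') as U1.
  pose proof (fe_half (-rM) (-rm) (-u) (-a) (-b) gb ga Vm Vp s h w0 gR nv ng nv' ng') as U2.
  assert (A1 : s * (Vm * gb - Vp * ga) <= h * (rM - u)) by (apply U1; auto; lra).
  assert (A2 : s * (Vp * ga - Vm * gb) <= h * (-rm - - u)).
  { apply U2; auto; try lra. }
  split.
  - apply (Rmult_le_reg_r h); [lra|]. unfold Rdiv. rewrite Rmult_plus_distr_r, Rmult_assoc, Rinv_l by lra. nra.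
  - apply (Rmult_le_reg_r h); [lra|]. unfold Rdiv. rewrite Rmult_plus_distr_r, Rmult_assoc, Rinv_l by lra. nra.
Qed.
Theorem theorem3p2
  (* standing assumptions (A) *)
  (rho_max eta : R) (g g' v v' w w' : R -> R)
  (Hrho_max : 0 < rho_max) (Heta : 0 < eta)
  (Hg : C1_on g g' 0 rho_max)
  (Hg0 : forall r, 0 <= r <= rho_max -> 0 <= g r)
  (Hg' : forall r, 0 <= r <= rho_max -> 0 <= g' r)
  (Hv : C1_on v v' 0 rho_max)
  (Hv0 : forall r, 0 <= r <= rho_max -> 0 <= v r)
  (Hv' : forall r, 0 <= r <= rho_max -> v' r <= 0)
  (Hw : C1_on w w' 0 eta)
  (Hw0 : forall s, 0 <= s <= eta -> 0 <= w s)
  (Hw' : forall s, 0 <= s <= eta -> w' s <= 0)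
  (prw : Riemann_integrable w 0 eta) (Hwint : RiemannInt prw = 1)
  (* sup norms on [0, rho_max] *)
  (nv' ng nv ng' : R)
  (Hnv' : is_supnorm v' 0 rho_max nv') (Hng : is_supnorm g 0 rho_max ng)
  (Hnv : is_supnorm v 0 rho_max nv) (Hng' : is_supnorm g' 0 rho_max ng')
  (* grid *)
  (h x0 : R) (N : nat) (Hh : 0 < h) (HN : INR N * h = eta)
  (* quadrature: nodes y_0..y_{Rq-1}, y_{Rq-1} = 1 *)
  (Rq : nat) (y gam : nat -> R) (HRq : (1 <= Rq)%nat)
  (Hy : forall nu, (nu < Rq)%nat -> 0 <= y nu <= 1)
  (HyR : y (Rq - 1)%nat = 1)
  (Hgam : forall nu, (nu < Rq)%nat -> 0 < gam nu)
  (Hgam1 : sumR Rq gam = 1)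
  (Hwnorm : h * sumR N (fun k => sumR Rq (fun nu => gam nu * w ((INR k + y nu) * h))) = 1)
  (* initial data *)
  (rho0 : R -> R) (Hrho0 : forall x, 0 <= rho0 x <= rho_max)
  (rho_m rho_M : R)
  (Hrm : is_glb (fun z => exists x, z = rho0 x) rho_m)
  (HrM : is_lub (fun z => exists x, z = rho0 x) rho_M)
  (* reconstruction with property (R) *)
  (rec : recon) (HR : property_R rec x0 h Rq y gam rho_m rho_M)
  (* SSP time integration *)
  (cSSP tau : R) (HcSSP : 0 < cSSP) (Htau : 0 < tau)
  (HCFL : tau * (gam (Rq - 1)%nat * h * w 0 * nv' * ng + nv * ng')
            <= cSSP * (gam (Rq - 1)%nat * h))
  (U : nat -> Z -> R)
  (HU0 : forall j, U 0%nat j = sumR Rq (fun nu => gam nu * rho0 (xl x0 h j + h * y nu)))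
  (HSSP : SSP_history (Lop rec x0 h N Rq y gam w v g) cSSP tau U)
  (* position of the time levels t^n = n tau in the computation history *)
  (step : nat -> nat) (Hstep0 : step 0%nat = 0%nat) :
  forall (n : nat) (j : Z), rho_m <= U (step n) j <= rho_M.
Proof.
  destruct Hrm as [HrmE Hrm2]. destruct HrM as [HrME HrM2].
  assert (Hrm0 : 0 <= rho_m) by (apply Hrm2; intros z [x ->]; apply Hrho0).
  assert (Hrmx : forall x, rho_m <= rho0 x) by (intros x; apply HrmE; eauto).
  assert (HrMx : forall x, rho0 x <= rho_M) by (intros x; apply HrME; eauto).
  assert (HrMmax : rho_M <= rho_max) by (apply HrM2; intros z [x ->]; apply Hrho0).
  assert (Hsn : forall f n, is_supnorm f 0 rho_max n -> forall z, 0 <= z <= rho_max -> Rabs (f z) <= n)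
    by (intros f n [Hn _] z Hz; apply Hn; eauto).
  assert (Hnv'0 : 0 <= nv') by (pose proof (Hsn _ _ Hnv' 0 ltac:(lra)); pose proof (Rabs_pos (v' 0)); lra).
  assert (Hng'0 : 0 <= ng') by (pose proof (Hsn _ _ Hng' 0 ltac:(lra)); pose proof (Rabs_pos (g' 0)); lra).
  assert (Hng0 : 0 <= ng) by (pose proof (Hsn _ _ Hng 0 ltac:(lra)); pose proof (Rabs_pos (g 0)); lra).
  assert (Hnv0 : 0 <= nv) by (pose proof (Hsn _ _ Hnv 0 ltac:(lra)); pose proof (Rabs_pos (v 0)); lra).
  assert (HN1 : (1 <= N)%nat).
  { destruct N; [simpl in HN; lra| lia]. }
  set (gR := gam (Rq - 1)%nat).
  assert (HgR : 0 < gR) by (apply Hgam; lia).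
  assert (Hw00 : 0 <= w 0) by (apply Hw0; lra).
  destruct Hw as [Hwd _]. destruct Hg as [Hgd _]. destruct Hv as [Hvd _].
  assert (Hwdec : forall s1 s2, 0 <= s1 -> s1 <= s2 -> s2 <= eta -> w s2 <= w s1).
  { intros s1 s2 H1 H2 H3. pose proof (mvt_upper w w' 0 eta 0 Hwd Hw' s1 s2 H1 H2 H3). lra. }
  assert (Hginc : forall a b, 0 <= a -> a <= b -> b <= rho_max -> g a <= g b).
  { intros a b H1 H2 H3. pose proof (mvt_lower g g' 0 rho_max 0 Hgd Hg' a b H1 H2 H3). lra. }
  assert (Hglip : forall a b, 0 <= a -> a <= b -> b <= rho_max -> g b - g a <= ng' * (b - a)).
  { intros a b H1 H2 H3. apply (mvt_upper g g' 0 rho_max ng' Hgd); auto.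
    intros z Hz. pose proof (Hsn _ _ Hng' z Hz). pose proof (Rle_abs (g' z)). lra. }
  assert (Hvdec : forall a b, 0 <= a -> a <= b -> b <= rho_max -> v b <= v a).
  { intros a b H1 H2 H3. pose proof (mvt_upper v v' 0 rho_max 0 Hvd Hv' a b H1 H2 H3). lra. }
  assert (Hvlip : forall a b, 0 <= a -> a <= b -> b <= rho_max -> v a - v b <= nv' * (b - a)).
  { intros a b H1 H2 H3. pose proof (mvt_lower v v' 0 rho_max (-nv') Hvd) as HH.
    assert (- nv' * (b - a) <= v b - v a). { apply HH; auto.
      intros z Hz. pose proof (Hsn _ _ Hnv' z Hz). pose proof (Rle_abs (- v' z)). rewrite Rabs_Ropp in *. lra. }
    lra. }
  assert (HWpos : forall k nu, (k < N)%nat -> (nu < Rq)%nat -> 0 <= w ((INR k + y nu) * h)).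
  { intros k nu Hk Hnu. apply Hw0. specialize (Hy nu Hnu). pose proof (pos_INR k).
    assert (INR (S k) <= INR N) by (apply le_INR; lia). rewrite S_INR in *. split; nra. }
  assert (FE : forall u, (forall l, rho_m <= u l <= rho_M) -> forall s, 0 <= s <= tau / cSSP ->
     forall j, rho_m <= u j + s * Lop rec x0 h N Rq y gam w v g u j <= rho_M).
  { intros u Hu s Hs j.
    set (rho := fun l nu => rho_nu rec x0 h y u l nu).
    assert (Hrho : forall l nu, (nu < Rq)%nat -> rho_m <= rho l nu <= rho_M)
      by (intros l nu Hnu; apply (proj2 (HR u Hu l)); auto).
    assert (Hsum : forall l, sumR Rq (fun nu => gam nu * rho l nu) = u l).
    { intros l. destruct (proj1 (HR u Hu l)) as [pr [E1 E2]]. unfold rho, rho_nu. rewrite E2, E1. auto. }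
    assert (Hminus : forall l, rho_minus rec x0 h u l = rho l (Rq - 1)%nat).
    { intros l. unfold rho_minus, rho, rho_nu. f_equal. unfold xl. rewrite HyR, plus_IZR. simpl. ring. }
    assert (Hlin : forall l (F : R -> R) c,
       sumR Rq (fun nu => gam nu * (c * F (rho l nu))) = c * sumR Rq (fun nu => gam nu * F (rho l nu))).
    { intros. rewrite <- sumR_scal. apply sumR_ext. intros; ring. }
    assert (HrMu : forall l, sumR Rq (fun nu => gam nu * (rho_M - rho l nu)) = rho_M - u l).
    { intros l. rewrite (sumR_ext _ _ (fun nu => rho_M * gam nu - gam nu * rho l nu)) by (intros; ring).
      rewrite sumR_minus, sumR_scal, Hgam1, Hsum. ring. }
    assert (Hurm : forall l, sumR Rq (fun nu => gam nu * (rho l nu - rho_m)) = u l - rho_m).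
    { intros l. rewrite (sumR_ext _ _ (fun nu => gam nu * rho l nu - rho_m * gam nu)) by (intros; ring).
      rewrite sumR_minus, sumR_scal, Hgam1, Hsum. ring. }
    assert (Hgap1 : forall l, gR * (rho_M - rho l (Rq - 1)%nat) <= rho_M - u l).
    { intros l. rewrite <- HrMu. apply (sumR_ge_term Rq (fun nu => gam nu * (rho_M - rho l nu))); [|lia].
      intros k Hk. specialize (Hgam k Hk). specialize (Hrho l k Hk). nra. }
    assert (Hgap2 : forall l, gR * (rho l (Rq - 1)%nat - rho_m) <= u l - rho_m).
    { intros l. rewrite <- Hurm. apply (sumR_ge_term Rq (fun nu => gam nu * (rho l nu - rho_m))); [|lia].
      intros k Hk. specialize (Hgam k Hk). specialize (Hrho l k Hk). nra. }
    set (W := fun k nu => w ((INR k + y nu) * h)).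
    set (A := fun l => h * sumR N (fun k => sumR Rq (fun nu => gam nu * W k nu * rho (l + Z.of_nat k + 1)%Z nu))).
    assert (HV : forall l, Vhalf rec x0 h N Rq y gam w v u l = v (A l)) by reflexivity.
    assert (HA : forall l, rho_m <= A l <= rho_M).
    { intros l.
      assert (Hc : forall c, h * sumR N (fun k => sumR Rq (fun nu => gam nu * W k nu * c)) = c).
      { intros c. rewrite (sumR_ext N _ (fun k => c * sumR Rq (fun nu => gam nu * W k nu))).
        - rewrite sumR_scal. transitivity (c * (h * sumR N (fun k => sumR Rq (fun nu => gam nu * W k nu)))); [ring|]. unfold W. rewrite Hwnorm. ring.
        - intros k Hk. rewrite <- sumR_scal. apply sumR_ext. intros; ring. }
      unfold A. split.
      - rewrite <- (Hc rho_m). apply Rmult_le_compat_l; [lra|]. apply sumR_le; intros k Hk.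
        apply sumR_le; intros nu Hnu. specialize (Hrho (l + Z.of_nat k + 1)%Z nu Hnu).
        assert (0 <= gam nu * W k nu) by (apply Rmult_le_pos; [apply Rlt_le, Hgam; auto| apply HWpos; auto]).
        apply Rmult_le_compat_l; lra.
      - rewrite <- (Hc rho_M). apply Rmult_le_compat_l; [lra|]. apply sumR_le; intros k Hk.
        apply sumR_le; intros nu Hnu. specialize (Hrho (l + Z.of_nat k + 1)%Z nu Hnu).
        assert (0 <= gam nu * W k nu) by (apply Rmult_le_pos; [apply Rlt_le, Hgam; auto| apply HWpos; auto]).
        apply Rmult_le_compat_l; lra. }
    set (f := fun nu k => rho (j + Z.of_nat k)%Z nu).
    assert (Hdiff : A j - A (j - 1)%Z = h * sumR Rq (fun nu => gam nu * sumR N (fun k => W k nu * (f nu (S k) - f nu k)))).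
    { unfold A. rewrite <- Rmult_minus_distr_l. f_equal. rewrite <- sumR_minus.
      rewrite (sumR_ext N _ (fun k => sumR Rq (fun nu => gam nu * (W k nu * (f nu (S k) - f nu k))))).
      - rewrite sumR_exch. apply sumR_ext. intros nu Hnu. rewrite <- sumR_scal. auto.
      - intros k Hk. rewrite <- sumR_minus. apply sumR_ext. intros nu Hnu. unfold f.
        rewrite Nat2Z.inj_succ. replace (j + Z.of_nat k + 1)%Z with (j + Z.succ (Z.of_nat k))%Z by lia.
        replace (j - 1 + Z.of_nat k + 1)%Z with (j + Z.of_nat k)%Z by lia. ring. }
    assert (Hc1 : forall nu, (nu < Rq)%nat -> forall k, (S k < N)%nat -> W (S k) nu <= W k nu).
    { intros nu Hnu k Hk. unfold W. specialize (Hy nu Hnu). pose proof (pos_INR k).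
      assert (INR (S (S k)) <= INR N) by (apply le_INR; lia). rewrite !S_INR in *.
      apply Hwdec; nra. }
    assert (Hc2 : forall nu, (nu < Rq)%nat -> forall k, (k < N)%nat -> 0 <= W k nu)
      by (intros; apply HWpos; auto).
    assert (Hc3 : forall nu, (nu < Rq)%nat -> W 0%nat nu <= w 0).
    { intros nu Hnu. unfold W. specialize (Hy nu Hnu). simpl INR.
      assert (INR 1 <= INR N) by (apply le_INR; lia). simpl INR in *. apply Hwdec; nra. }
    assert (Hf0 : forall nu, f nu 0%nat = rho j nu) by (intros; unfold f; rewrite Z.add_0_r; auto).
    assert (Hd1 : A j - A (j - 1)%Z <= h * w 0 * (rho_M - u j)).
    { rewrite Hdiff, <- HrMu.
      assert (Hs1 : sumR Rq (fun nu => gam nu * sumR N (fun k => W k nu * (f nu (S k) - f nu k)))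
                 <= sumR Rq (fun nu => w 0 * (gam nu * (rho_M - rho j nu)))).
      { apply sumR_le. intros nu Hnu.
        pose proof (abel_up (fun k => W k nu) (f nu) rho_M N (Hc1 nu Hnu) (Hc2 nu Hnu) (Hc2 nu Hnu 0%nat ltac:(lia))
          ltac:(intros k _; unfold f; apply Hrho; auto)) as Hab.
        rewrite Hf0 in Hab. specialize (Hrho j nu Hnu). specialize (Hgam nu Hnu). specialize (Hc3 nu Hnu).
        assert (W 0%nat nu * (rho_M - rho j nu) <= w 0 * (rho_M - rho j nu)) by nra. nra. }
      rewrite sumR_scal in Hs1. rewrite Rmult_assoc. apply Rmult_le_compat_l; lra. }
    assert (Hd2 : A (j - 1)%Z - A j <= h * w 0 * (u j - rho_m)).
    { replace (A (j - 1)%Z - A j) with (- (A j - A (j - 1)%Z)) by ring.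
      rewrite Hdiff, <- Hurm.
      assert (Hs1 : sumR Rq (fun nu => - (w 0 * (gam nu * (rho j nu - rho_m))))
                 <= sumR Rq (fun nu => gam nu * sumR N (fun k => W k nu * (f nu (S k) - f nu k)))).
      { apply sumR_le. intros nu Hnu.
        pose proof (abel_lo (fun k => W k nu) (f nu) rho_m N (Hc1 nu Hnu) (Hc2 nu Hnu) (Hc2 nu Hnu 0%nat ltac:(lia))
          ltac:(intros k _; unfold f; apply Hrho; auto)) as Hab.
        rewrite Hf0 in Hab.
        rewrite (sumR_ext N _ (fun k => -1 * (W k nu * (f nu (S k) - f nu k)))) in Hab by (intros; ring).
        rewrite sumR_scal in Hab.
        specialize (Hrho j nu Hnu). specialize (Hgam nu Hnu). specialize (Hc3 nu Hnu).
        assert (W 0%nat nu * (rho j nu - rho_m) <= w 0 * (rho j nu - rho_m)) by nra. nra. }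
      rewrite (sumR_ext Rq _ (fun nu => -1 * (w 0 * (gam nu * (rho j nu - rho_m))))) in Hs1 by (intros; ring).
      rewrite !sumR_scal in Hs1. nra. }
    assert (HA0 : forall l, 0 <= A l <= rho_max) by (intros l; specialize (HA l); lra).
    assert (HX : 0 <= gR * h * w 0 * nv' * ng + nv * ng').
    { assert (0 <= gR * h * w 0 * nv' * ng) by (repeat apply Rmult_le_pos; lra).
      assert (0 <= nv * ng') by (apply Rmult_le_pos; lra). lra. }
    assert (Hrb : forall l nu, (nu < Rq)%nat -> 0 <= rho l nu <= rho_max)
      by (intros l nu Hnu; specialize (Hrho l nu Hnu); lra).
    assert (HRq1 : (Rq - 1 < Rq)%nat) by lia.
    unfold Lop. rewrite !HV, !Hminus.
    apply (fe_core rho_m rho_M (u j) (rho j (Rq-1)%nat) (rho (j-1)%Z (Rq-1)%nat)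
      (g (rho j (Rq-1)%nat)) (g (rho (j-1)%Z (Rq-1)%nat)) (v (A j)) (v (A (j-1)%Z)) s h (w 0) gR nv ng nv' ng').
    - exact HgR.
    - exact Hh.
    - lra.
    - apply Hu.
    - apply Hgap1.
    - apply Hgap2.
    - apply Hrho; auto.
    - apply Hrho; auto.
    - split; [apply Hg0; auto|]. pose proof (Hsn _ _ Hng _ (Hrb j _ HRq1)). pose proof (Rle_abs (g (rho j (Rq - 1)%nat))). lra.
    - split; [apply Hg0; auto|]. pose proof (Hsn _ _ Hng _ (Hrb (j-1)%Z _ HRq1)). pose proof (Rle_abs (g (rho (j-1)%Z (Rq - 1)%nat))). lra.
    - intros; apply Hginc; try apply Hrb; auto.
    - intros; apply Hglip; try apply Hrb; auto.
    - intros; apply Hginc; try apply Hrb; auto.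
    - intros; apply Hglip; try apply Hrb; auto.
    - split; [apply Hv0; auto|]. pose proof (Hsn _ _ Hnv _ (HA0 j)). pose proof (Rle_abs (v (A j))). lra.
    - split; [apply Hv0; auto|]. pose proof (Hsn _ _ Hnv _ (HA0 (j-1)%Z)). pose proof (Rle_abs (v (A (j-1)%Z))). lra.
    - destruct (Rle_dec (A (j-1)%Z) (A j)) as [Hle|Hlt].
      + pose proof (Hvlip (A (j-1)%Z) (A j) ltac:(apply HA0) Hle ltac:(apply HA0)).
        assert (nv' * (A j - A (j - 1)%Z) <= nv' * (h * w 0 * (rho_M - u j))) by (apply Rmult_le_compat_l; lra). lra.
      + pose proof (Hvdec (A j) (A (j-1)%Z) ltac:(apply HA0) ltac:(lra) ltac:(apply HA0)).
        assert (0 <= nv' * (h * w 0 * (rho_M - u j))) by (specialize (Hu j); repeat apply Rmult_le_pos; lra). lra.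
    - destruct (Rle_dec (A j) (A (j-1)%Z)) as [Hle|Hlt].
      + pose proof (Hvlip (A j) (A (j-1)%Z) ltac:(apply HA0) Hle ltac:(apply HA0)).
        assert (nv' * (A (j-1)%Z - A j) <= nv' * (h * w 0 * (u j - rho_m))) by (apply Rmult_le_compat_l; lra). lra.
      + pose proof (Hvdec (A (j-1)%Z) (A j) ltac:(apply HA0) ltac:(lra) ltac:(apply HA0)).
        assert (0 <= nv' * (h * w 0 * (u j - rho_m))) by (specialize (Hu j); repeat apply Rmult_le_pos; lra). lra.
    - exact Hnv'0.
    - exact Hw00.
    - exact Hng'0.
    - apply Rle_trans with (tau / cSSP * (gR * h * w 0 * nv' * ng + nv * ng')).
      + apply Rmult_le_compat_r; lra.
      + apply (Rmult_le_reg_l cSSP); [lra|].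
        replace (cSSP * (tau / cSSP * (gR * h * w 0 * nv' * ng + nv * ng'))) with
          (tau * (gR * h * w 0 * nv' * ng + nv * ng')) by (field; lra).
        exact HCFL. }
  assert (Hall : forall m j, rho_m <= U m j <= rho_M).
  { intros m. induction m as [m IH] using lt_wf_ind. intros j.
    destruct m as [|m'].
    - rewrite HU0. apply convex_bnd; auto. intros k Hk. split; [apply Rlt_le, Hgam; auto|]. auto.
    - destruct (HSSP (S m') ltac:(lia)) as [K [idx [alpha [beta [Hk [Ha HUm]]]]]].
      rewrite HUm. apply (convex_bnd K alpha (fun k => U (idx k) j + tau * beta k * Lop rec x0 h N Rq y gam w v g (U (idx k)) j)); auto.
      intros k Hkk. destruct (Hk k Hkk) as [Hi [Hal Hbe]]. split; auto.
      apply FE.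
      + intros l. apply IH. auto.
      + split; [apply Rmult_le_pos; lra|].
        replace (tau / cSSP) with (tau * (1 / cSSP)) by (field; lra).
        apply Rmult_le_compat_l; lra. }
  intros n j. apply Hall.
Qed.
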